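(* Let $K$ be an algebraically closed field with $\operatorname{char}K\neq 2$, and let $f$ be a Lie polynomial (not necessarily homogeneous) in $x_1,\dots,x_m$, evaluated on $\operatorname{sl}_2(K)$. Then $\operatorname{Im} f$ is one of: $\{0\}$; $\operatorname{sl}_2(K)$; or the set consisting of $0$ and all non-nilpotent trace-zero $2\times 2$ matrices.
   Context: A Lie polynomial is an element of the free Lie algebra on $x_1,\dots,x_m$, i.e. a linear combination of Lie monomials built from the letters by iterated brackets; it is viewed as an associative polynomial via $[a,b]=ab-ba$. $\operatorname{sl}_2(K)$ is the Lie algebra of trace-zero $2\times 2$ matrices, and $\operatorname{Im} f=\{f(a_1,\dots,a_m):a_i\in\operatorname{sl}_2(K)\}$. *)

(* Defs.v *)
From HB Require Import structures.
From mathcomp Require Import all_boot all_order all_algebra all_field.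
Set Implicit Arguments. Unset Strict Implicit. Unset Printing Implicit Defensive.
Import GRing.Theory.
Local Open Scope ring_scope.

(* Lie terms over K in the letters x_0, ..., x_(m-1): linear combinations of
   iterated brackets of letters.  Every element of the free Lie algebra on
   m letters is represented by such a term, and the evaluation on any Lie
   algebra (here 2x2 matrices with [a,b] = ab - ba) is independent of the
   representative. *)
Inductive lie_poly (K : Type) (m : nat) : Type :=
| LZero : lie_poly K m
| LVar : 'I_m -> lie_poly K m
| LAdd : lie_poly K m -> lie_poly K m -> lie_poly K m
| LScale : K -> lie_poly K m -> lie_poly K m
| LBr : lie_poly K m -> lie_poly K m -> lie_poly K m.

Definition lie_br (K : nzRingType) (A B : 'M[K]_2) : 'M[K]_2 := A * B - B * A.

Fixpoint lie_eval (K : nzRingType) (m : nat) (a : 'I_m -> 'M[K]_2)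
  (f : lie_poly K m) : 'M[K]_2 :=
  match f with
  | LZero => 0
  | LVar i => a i
  | LAdd f g => lie_eval a f + lie_eval a g
  | LScale c f => c *: lie_eval a f
  | LBr f g => lie_br (lie_eval a f) (lie_eval a g)
  end.

Definition in_sl2 (K : nzRingType) (A : 'M[K]_2) : Prop := \tr A = 0.

Definition lie_image (K : nzRingType) (m : nat) (f : lie_poly K m)
  (M : 'M[K]_2) : Prop :=
  exists a : 'I_m -> 'M[K]_2, (forall i, in_sl2 (a i)) /\ lie_eval a f = M.

Definition nilpotent_mx (K : nzRingType) (A : 'M[K]_2) : Prop :=
  exists n : nat, A ^+ n = 0.

(* Main.v *)
Require Import Defs.
From Stdlib Require Import Classical.
From HB Require Import structures.
From mathcomp Require Import all_boot all_order all_algebra all_field.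
From mathcomp Require Import zify ring.
Set Implicit Arguments. Unset Strict Implicit. Unset Printing Implicit Defensive.
Import GRing.Theory.
Local Open Scope ring_scope.
Lemma size_sq (D : idomainType) (a : {poly D}) : a != 0 ->
  size (a * a) = (2 * size a).-1%N.
Proof. move=> a0; rewrite size_mul //; congr (_.-1); lia. Qed.

Lemma ns1 (R : idomainType) (a b : {poly R}) : a * a = 'X * (b * b) -> a = 0.
Proof.
move=> E; have [b0|b0] := eqVneq b 0.
  by move: E; rewrite b0 mul0r mulr0 => /eqP; rewrite mulf_eq0 orbb => /eqP.
have [//|a0] := eqVneq a 0.
have := congr1 (fun p : {poly R} => size p) E; rewrite /= size_sq // mulrC size_mulX;
  last by rewrite mulf_neq0.
rewrite size_sq //.
have : (0 < size a)%N by rewrite size_poly_gt0.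
have : (0 < size b)%N by rewrite size_poly_gt0.
lia.
Qed.

Lemma ns2 (D : idomainType) (x : D)
  (Hx : forall a b : D, a * a = x * (b * b) -> a = 0)
  (a b : {poly D}) : a * a = x%:P * (b * b) -> a = 0.
Proof.
move=> E; have := congr1 lead_coef E; rewrite !lead_coefM lead_coefC.
by move/Hx => /eqP; rewrite lead_coef_eq0 => /eqP.
Qed.

Lemma oddsize (D : idomainType) (x : D) (x0 : x != 0)
  (Hx : forall a b : D, a * a = x * (b * b) -> a = 0)
  (a b : {poly D}) : (a != 0) || (b != 0) ->
  odd (size (a * a - x%:P * (b * b))).
Proof.
have Hsq : forall c : {poly D}, c != 0 -> odd (size (c * c)).
  move=> c c0; rewrite size_sq //.
  have : (0 < size c)%N by rewrite size_poly_gt0.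
  move=> h; have -> : (2 * size c).-1 = (size c).-1.*2 + 1 by lia.
  by rewrite oddD odd_double.
have [->|b0] := eqVneq b 0.
  by rewrite orbF mul0r mulr0 subr0; apply: Hsq.
have Hq : odd (size (x%:P * (b * b))) by rewrite size_Cmul //; apply: Hsq.
have [->|a0] := eqVneq a 0.
  by rewrite mul0r sub0r size_polyN.
move=> _.
have Hp := Hsq a a0.
set p := a * a in Hp *; set q := x%:P * (b * b) in Hq *.
have [lt|gt|eq] := ltngtP (size q) (size p).
- by rewrite size_polyDl // size_polyN.
- by rewrite addrC size_polyDl ?size_polyN.
- have sp0 : (0 < size p)%N by rewrite size_poly_gt0 mulf_neq0.
  have Hc : (p - q)`_(size p).-1 != 0.
    have -> : (p - q)`_(size p).-1 = lead_coef p - lead_coef q.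
      by rewrite coefB /lead_coef eq.
    rewrite subr_eq0 /p /q !lead_coefM lead_coefC; apply/eqP => E.
    by move: (Hx _ _ E) => /eqP; rewrite lead_coef_eq0 (negPf a0).
  have le : (size (p - q)%R <= size p)%N.
    by apply: (leq_trans (size_polyD p (- q))); rewrite size_polyN eq maxnn.
  have ge : ((size p).-1 < size (p - q)%R)%N.
    rewrite ltnNge; apply/negP => /leq_sizeP /(_ _ (leqnn _)) h.
    by rewrite h eqxx in Hc.
  have -> : size (p - q) = size p by lia.
  exact: Hp.
Qed.

Lemma parity (K : idomainType) (c1 c2 c3 : {poly {poly K}}) :
  ('X)%:P * (c1 * c1) + 'X * (c2 * c2) - ('X)%:P * 'X * (c3 * c3) = 0 ->
  [/\ c1 = 0, c2 = 0 & c3 = 0].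
Proof.
set x : {poly K} := 'X.
have x0 : x != 0 by rewrite /x polyX_eq0.
have Hx : forall a b : {poly K}, a * a = x * (b * b) -> a = 0 by exact: ns1.
move=> E.
set B := c2 * c2 - x%:P * (c3 * c3).
have E2 : x%:P * (c1 * c1) = - ('X * B).
  by apply/eqP; rewrite -subr_eq0 opprK -E /B; apply/eqP; ring.
have hc23 : (c2 == 0) && (c3 == 0).
  apply/negPn/negP; rewrite negb_and => h.
  have ob := @oddsize _ x x0 Hx _ _ h; rewrite -/B in ob.
  have B0 : B != 0 by rewrite -size_poly_eq0; apply/eqP => e; rewrite e in ob.
  have := congr1 (fun p : {poly {poly K}} => size p) E2; rewrite /= size_polyN (mulrC (polyX _) B) size_mulX //.
  have [->|c10] := eqVneq c1 0; first by rewrite !mulr0 size_poly0.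
  have := @oddsize _ x x0 Hx 0 c1; rewrite c10 orbT mul0r sub0r size_polyN => /(_ isT).
  by move=> o e; rewrite e /= ob in o.
move: hc23 => /andP[/eqP c20 /eqP c30].
split=> //.
move: E2; rewrite /B c20 c30 !mulr0 subr0 mulr0 oppr0 => /eqP.
by rewrite !mulf_eq0 polyC_eq0 (negPf x0) orbb /= => /eqP.
Qed.
Definition ev (K : comNzRingType) (X0 y0 : K) (p : {poly {poly K}}) : K :=
  (map_poly (horner_eval X0) p).[y0].
Arguments ev {K} X0 y0 p.

Lemma nonroot (K : closedFieldType) (q : {poly K}) : q != 0 -> exists x, q.[x] != 0.
Proof.
move=> q0; have sz : size (q * 'X - 1) = (size q).+1.
  have s1 : size (q * 'X) = (size q).+1 by rewrite size_mulX.
  rewrite size_polyDl s1 // size_polyN size_poly1 ltnS lt0n size_poly_eq0.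
  exact: q0.
have /closed_rootP [x rx] : size (q * 'X - 1) != 1.
  by rewrite sz eqSS size_poly_eq0.
exists x; move: rx; rewrite /root !hornerE => /eqP h; apply/eqP => h2.
by move: h; rewrite h2 mul0r sub0r => /eqP; rewrite oppr_eq0 oner_eq0.
Qed.

Lemma hit1 (K : closedFieldType) (q : {poly K}) d : (1 < size q)%N -> exists x, q.[x] = d.
Proof.
move=> sq; have sz : size (q - d%:P) = size q.
  rewrite size_polyDl // size_polyN; apply: leq_ltn_trans sq; exact: size_polyC_leq1.
have /closed_rootP [x rx] : size (q - d%:P) != 1.
  by rewrite sz; case: (size q) sq => [|[]].
by exists x; move: rx; rewrite /root !hornerE subr_eq0 => /eqP.
Qed.

Lemma surj2 (K : closedFieldType) (N : {poly {poly K}}) :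
  N != 0 -> ev 0 0 N = 0 -> forall d, exists X0 y0, ev X0 y0 N = d.
Proof.
move=> N0 e0 d; have [lt|le] := ltnP 1 (size N).
  have l0 : lead_coef N != 0 by rewrite lead_coef_eq0.
  have [X0 hX0] := nonroot l0.
  have sz : size (map_poly (horner_eval X0) N) = size N.
    by apply: size_map_poly_id0; rewrite horner_evalE.
  have [y0 hy0] := hit1 d (leq_trans lt (eq_leq (esym sz))).
  by exists X0, y0.
have eN := size1_polyC le.
have q0 : N`_0 != 0 by apply: contraNneq N0 => h; rewrite eN h.
move: e0; rewrite /ev eN map_polyC hornerC /= => e0.
have sq : (1 < size (N`_0)%R)%N.
  rewrite ltn_neqAle eq_sym lt0n size_poly_eq0 q0 andbT.
  apply/negP => /size_poly1P [c c0 ec].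
  by move: e0; rewrite ec horner_evalE hornerC => /eqP; rewrite (negPf c0).
have [X0 hX0] := hit1 d sq.
exists X0, 0; rewrite /ev eN map_polyC hornerC.
by rewrite coefC /= horner_evalE.
Qed.
Definition mk2 (K : nzRingType) (a b c d : K) : 'M[K]_2 :=
  \matrix_(i < 2, j < 2)
    (if (i : nat) == 0%N then (if (j : nat) == 0%N then a else b)
     else (if (j : nat) == 0%N then c else d)).

Lemma mk2E (K : nzRingType) (A : 'M[K]_2) : A = mk2 (A 0 0) (A 0 1) (A 1 0) (A 1 1).
Proof.
by apply/matrixP => i j; rewrite mxE; case: i => [[|[|//]] ?]; case: j => [[|[|//]] ?] /=;
  congr (A _ _); apply: val_inj.
Qed.

Lemma mk2_00 (K : nzRingType) (a b c d : K) : mk2 a b c d 0 0 = a.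
Proof. by rewrite mxE. Qed.
Lemma mk2_01 (K : nzRingType) (a b c d : K) : mk2 a b c d 0 1 = b.
Proof. by rewrite mxE. Qed.
Lemma mk2_10 (K : nzRingType) (a b c d : K) : mk2 a b c d 1 0 = c.
Proof. by rewrite mxE. Qed.
Lemma mk2_11 (K : nzRingType) (a b c d : K) : mk2 a b c d 1 1 = d.
Proof. by rewrite mxE. Qed.

Lemma mk2_inj (K : nzRingType) (a b c d a' b' c' d' : K) :
  mk2 a b c d = mk2 a' b' c' d' -> [/\ a = a', b = b', c = c' & d = d'].
Proof.
move=> e; split.
- by have := congr1 (fun M : 'M[K]_2 => M 0 0) e; rewrite /= !mk2_00.
- by have := congr1 (fun M : 'M[K]_2 => M 0 1) e; rewrite /= !mk2_01.
- by have := congr1 (fun M : 'M[K]_2 => M 1 0) e; rewrite /= !mk2_10.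
- by have := congr1 (fun M : 'M[K]_2 => M 1 1) e; rewrite /= !mk2_11.
Qed.

Lemma mk2_mul (K : nzRingType) (a b c d a' b' c' d' : K) :
  mk2 a b c d * mk2 a' b' c' d' =
  mk2 (a * a' + b * c') (a * b' + b * d') (c * a' + d * c') (c * b' + d * d').
Proof.
apply/matrixP => i j; rewrite !mxE big_ord_recl big_ord_recl big_ord0 addr0 !mxE /=.
by case: i => [[|[|//]] ?]; case: j => [[|[|//]] ?].
Qed.

Lemma mk2_add (K : nzRingType) (a b c d a' b' c' d' : K) :
  mk2 a b c d + mk2 a' b' c' d' = mk2 (a + a') (b + b') (c + c') (d + d').
Proof.
apply/matrixP => i j; rewrite !mxE /=.
by case: i => [[|[|//]] ?]; case: j => [[|[|//]] ?].
Qed.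

Lemma mk2_opp (K : nzRingType) (a b c d : K) :
  - mk2 a b c d = mk2 (- a) (- b) (- c) (- d).
Proof.
apply/matrixP => i j; rewrite !mxE /=.
by case: i => [[|[|//]] ?]; case: j => [[|[|//]] ?].
Qed.

Lemma mk2_scale (K : nzRingType) (k a b c d : K) :
  k *: mk2 a b c d = mk2 (k * a) (k * b) (k * c) (k * d).
Proof.
apply/matrixP => i j; rewrite !mxE /=.
by case: i => [[|[|//]] ?]; case: j => [[|[|//]] ?].
Qed.

Lemma mk2_0 (K : nzRingType) : (0 : 'M[K]_2) = mk2 0 0 0 0.
Proof. by rewrite [LHS]mk2E !mxE. Qed.

Lemma mk2_1 (K : nzRingType) : (1 : 'M[K]_2) = mk2 1 0 0 1.
Proof. by rewrite [LHS]mk2E !mxE. Qed.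

Lemma det_mk2 (K : comNzRingType) (a b c d : K) : \det (mk2 a b c d) = a * d - b * c.
Proof.
rewrite (expand_det_row _ 0) big_ord_recl big_ord_recl big_ord0 addr0.
rewrite /cofactor !det_mx11 !mxE /=.
by rewrite /bump /= expr0 expr1; ring.
Qed.

Lemma tr_mk2 (K : nzRingType) (a b c d : K) : \tr (mk2 a b c d) = a + d.
Proof. by rewrite /mxtrace big_ord_recl big_ord_recl big_ord0 addr0 !mxE. Qed.
Lemma evD (K : comNzRingType) X0 y0 (p q : {poly {poly K}}) : ev X0 y0 (p + q) = ev X0 y0 p + ev X0 y0 q.
Proof. by rewrite /ev rmorphD hornerD. Qed.
Lemma evN (K : comNzRingType) X0 y0 (p : {poly {poly K}}) : ev X0 y0 (- p) = - ev X0 y0 p.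
Proof. by rewrite /ev rmorphN hornerN. Qed.
Lemma evB (K : comNzRingType) X0 y0 (p q : {poly {poly K}}) : ev X0 y0 (p - q) = ev X0 y0 p - ev X0 y0 q.
Proof. by rewrite evD evN. Qed.
Lemma evM (K : comNzRingType) X0 y0 (p q : {poly {poly K}}) : ev X0 y0 (p * q) = ev X0 y0 p * ev X0 y0 q.
Proof. by rewrite /ev rmorphM hornerM. Qed.
Lemma evC (K : comNzRingType) X0 y0 (c : K) : ev X0 y0 (c%:P%:P) = c.
Proof. by rewrite /ev map_polyC hornerC; apply: hornerC. Qed.
Lemma evXi (K : comNzRingType) X0 y0 : ev X0 y0 (('X : {poly K})%:P) = X0.
Proof. by rewrite /ev map_polyC hornerC; apply: hornerX. Qed.
Lemma evY (K : comNzRingType) X0 y0 : ev X0 y0 ('X : {poly {poly K}}) = y0.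
Proof. by rewrite /ev map_polyX hornerX. Qed.
Lemma evn (K : comNzRingType) X0 y0 n : ev X0 y0 (n%:R : {poly {poly K}}) = n%:R.
Proof. by rewrite /ev rmorphMn rmorph1 hornerMn hornerC. Qed.
Lemma ev0 (K : comNzRingType) X0 y0 : ev X0 y0 (0 : {poly {poly K}}) = 0.
Proof. by rewrite /ev rmorph0 horner0. Qed.

Definition evE := (evD, evN, evM, evC, evXi, evY, evn, ev0).

Record trip (K : nzRingType) := Trip { t1 : {poly {poly K}}; t2 : {poly {poly K}}; t3 : {poly {poly K}} }.

Definition Xi (K : nzRingType) : {poly {poly K}} := ('X : {poly K})%:P.
Arguments Xi {K}.

Definition tbr (K : nzRingType) (a b : trip K) : trip K :=
  Trip (- 2%:R * 'X * (t2 a * t3 b - t3 a * t2 b))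
       (- 2%:R * Xi * (t3 a * t1 b - t1 a * t3 b))
       (2%:R * (t1 a * t2 b - t2 a * t1 b)).

Fixpoint trip_eval (K : nzRingType) (m : nat) (t : 'I_m -> trip K) (f : lie_poly K m) : trip K :=
  match f with
  | LZero => Trip 0 0 0
  | LVar i => t i
  | LAdd f g => let a := trip_eval t f in let b := trip_eval t g in
      Trip (t1 a + t1 b) (t2 a + t2 b) (t3 a + t3 b)
  | LScale c f => let a := trip_eval t f in
      Trip (c%:P%:P * t1 a) (c%:P%:P * t2 a) (c%:P%:P * t3 a)
  | LBr f g => tbr (trip_eval t f) (trip_eval t g)
  end.

Definition rho (K : comNzRingType) (x y : K) (T : trip K) : 'M[K]_2 :=
  let e1 := ev (x ^+ 2) y (t1 T) in
  let e2 := ev (x ^+ 2) y (t2 T) in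
  let e3 := ev (x ^+ 2) y (t3 T) in
  mk2 (e1 * x) (e2 + e3 * x) (e2 * y - e3 * x * y) (- (e1 * x)).

Lemma rho_eval (K : comNzRingType) (m : nat) (x y : K) (t : 'I_m -> trip K) (f : lie_poly K m) :
  rho x y (trip_eval t f) = lie_eval (fun i => rho x y (t i)) f.
Proof.
elim: f => [|i|f IHf g IHg|c f IHf|f IHf g IHg] /=.
- by rewrite /rho /= !evE mk2_0; congr mk2; ring.
- by [].
- by rewrite -IHf -IHg /rho /= mk2_add !evE; congr mk2; ring.
- by rewrite -IHf /rho /= mk2_scale !evE; congr mk2; ring.
- rewrite -IHf -IHg /rho /lie_br /= !mk2_mul mk2_opp mk2_add !evE; congr mk2; ring.
Qed.

Definition NT (K : nzRingType) (T : trip K) : {poly {poly K}} :=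
  - (Xi * (t1 T * t1 T) + 'X * (t2 T * t2 T) - Xi * 'X * (t3 T * t3 T)).

Lemma det_rho (K : comNzRingType) (x y : K) (T : trip K) :
  \det (rho x y T) = ev (x ^+ 2) y (NT T).
Proof. by rewrite /rho det_mk2 /NT !evE; ring. Qed.

Lemma tr_rho (K : comNzRingType) (x y : K) (T : trip K) : \tr (rho x y T) = 0.
Proof. by rewrite /rho tr_mk2 addrN. Qed.
Lemma tr_conj (K : fieldType) (P A : 'M[K]_2) : P \is a GRing.unit -> \tr (P * A * P^-1) = \tr A.
Proof. by move=> Pu; rewrite -mulmxE mxtrace_mulC mulmxE mulrA mulVr // mul1r. Qed.

Lemma tr_eval (K : fieldType) m (a : 'I_m -> 'M[K]_2) (f : lie_poly K m) :
  (forall i, \tr (a i) = 0) -> \tr (lie_eval a f) = 0.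
Proof.
move=> ha; elim: f => [|i|f IHf g IHg|c f IHf|f IHf g IHg] /=.
- exact: mxtrace0.
- exact: ha.
- by rewrite mxtraceD IHf IHg addr0.
- by rewrite mxtraceZ IHf mulr0.
- by rewrite /lie_br linearB /= -!mulmxE mxtrace_mulC subrr.
Qed.

Lemma eval0 (K : fieldType) m (f : lie_poly K m) : lie_eval (fun _ => 0) f = 0.
Proof.
elim: f => [|i|f IHf g IHg|c f IHf|f IHf g IHg] //=.
- by rewrite IHf IHg addr0.
- by rewrite IHf scaler0.
- by rewrite IHf IHg /lie_br mulr0 subrr.
Qed.

Lemma eval_conj (K : fieldType) m (P : 'M[K]_2) (a : 'I_m -> 'M[K]_2) (f : lie_poly K m) :
  P \is a GRing.unit ->
  lie_eval (fun i => P * a i * P^-1) f = P * lie_eval a f * P^-1.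
Proof.
move=> Pu; elim: f => [|i|f IHf g IHg|c f IHf|f IHf g IHg] //=.
- by rewrite mulr0 mul0r.
- by rewrite IHf IHg mulrDr mulrDl.
- by rewrite IHf -scalerAr -scalerAl.
- rewrite IHf IHg /lie_br.
  set A := lie_eval a f; set B := lie_eval a g.
  have e : forall X Y : 'M[K]_2, (P * X * P^-1) * (P * Y * P^-1) = P * (X * Y) * P^-1.
    by move=> X Y; rewrite !mulrA divrK // -!mulrA.
  by rewrite !e mulrBr mulrBl.
Qed.

Lemma image_sl2 (K : fieldType) m (f : lie_poly K m) M : lie_image f M -> in_sl2 M.
Proof. by case=> a [ha <-]; apply: tr_eval. Qed.

Lemma image0 (K : fieldType) m (f : lie_poly K m) : lie_image f 0.
Proof. exists (fun _ => 0); split; first by move=> i; rewrite /in_sl2 mxtrace0.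
exact: eval0. Qed.

Lemma image_conj (K : fieldType) m (f : lie_poly K m) (P M : 'M[K]_2) :
  P \is a GRing.unit -> lie_image f M -> lie_image f (P * M * P^-1).
Proof.
move=> Pu [a [ha <-]]; exists (fun i => P * a i * P^-1); split.
  by move=> i; rewrite /in_sl2 tr_conj //; apply: ha.
exact: eval_conj.
Qed.

Lemma image_transfer (K : fieldType) m (f : lie_poly K m) (A B P Q D : 'M[K]_2) :
  P \is a GRing.unit -> Q \is a GRing.unit -> A * P = P * D -> B * Q = Q * D ->
  lie_image f B -> lie_image f A.
Proof.
move=> Pu Qu eA eB hB.
have hD : lie_image f D.
  have := @image_conj _ _ f (Q^-1) B; rewrite unitrV => /(_ Qu hB).
  by rewrite invrK -mulrA eB mulKr.
have -> : A = P * D * P^-1 by rewrite -eA mulrK.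
exact: image_conj.
Qed.

Lemma unit_mk2 (K : fieldType) (a b c d : K) : a * d - b * c != 0 -> mk2 a b c d \is a GRing.unit.
Proof. by move=> h; rewrite -[_ \is a _]/(_ \in unitmx) unitmxE det_mk2 unitfE. Qed.

Lemma sl2E (K : nzRingType) (A : 'M[K]_2) : \tr A = 0 -> A = mk2 (A 0 0) (A 0 1) (A 1 0) (- A 0 0).
Proof.
move=> t; have h : A 0 0 + A 1 1 = 0.
  rewrite -t /mxtrace big_ord_recl big_ord_recl big_ord0 addr0.
  by congr (A _ _ + A _ _); apply: val_inj.
rewrite {1}[A]mk2E; congr (mk2 _ _ _ _); apply/eqP; by rewrite -addr_eq0 addrC h.
Qed.
Lemma by_rel (K : comNzRingType) (r x y k : K) : r = 0 -> x - y = k * r -> x = y.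
Proof. by move=> -> e; apply/eqP; rewrite -subr_eq0 e mulr0. Qed.

Ltac solve_rel hr :=
  first [ apply: (@by_rel _ _ _ _ 0 hr); ring
        | apply: (@by_rel _ _ _ _ 1 hr); ring
        | apply: (@by_rel _ _ _ _ (-1) hr); ring ].

Lemma detX2 (K : fieldType) (A : 'M[K]_2) n : \det (A ^+ n) = \det A ^+ n.
Proof.
elim: n => [|n IH]; first by rewrite !expr0; exact: det1.
by rewrite !exprS detM IH.
Qed.

Lemma nilp_det (K : fieldType) (A : 'M[K]_2) : \tr A = 0 -> (nilpotent_mx A <-> \det A = 0).
Proof.
move=> t; rewrite (sl2E t); set a := A 0 0; set b := A 0 1; set c := A 1 0.
split.
  case=> n hn; apply/eqP; apply: contraT => d0.
  have := congr1 (fun M : 'M[K]_2 => \det M) hn; rewrite /= detX2 det0 => /eqP.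
  by rewrite expf_eq0 (negPf d0) andbF.
rewrite det_mk2 => hr; exists 2%N; rewrite expr2 mk2_mul mk2_0.
congr (mk2 _ _ _ _); solve_rel hr.
Qed.

Lemma nf_ss (K : fieldType) (A : 'M[K]_2) (l : K) : (2%:R : K) != 0 ->
  \tr A = 0 -> l != 0 -> l ^+ 2 = - \det A ->
  exists P, P \is a GRing.unit /\ A * P = P * mk2 l 0 0 (- l).
Proof.
move=> two t l0; rewrite (sl2E t) det_mk2; set a := A 0 0; set b := A 0 1; set c := A 1 0.
move=> hl; have hr : l ^+ 2 - a * a - b * c = 0 by rewrite hl; ring.
have [al|al] := eqVneq (a + l) 0.
  have ea : a = - l by apply/eqP; rewrite -addr_eq0 al.
  exists (mk2 b (a - l) (l - a) c); split.
    apply: unit_mk2; have -> : b * c - (a - l) * (l - a) = 2%:R * 2%:R * l * l.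
      by rewrite ea in hr *; solve_rel hr.
    by rewrite !mulf_neq0.
  by rewrite !mk2_mul; congr (mk2 _ _ _ _); solve_rel hr.
exists (mk2 (a + l) b c (- (a + l))); split.
  apply: unit_mk2; have -> : (a + l) * - (a + l) - b * c = - (2%:R * l * (a + l)).
    by solve_rel hr.
  by rewrite oppr_eq0 !mulf_neq0.
by rewrite !mk2_mul; congr (mk2 _ _ _ _); solve_rel hr.
Qed.

Lemma nf_nil (K : fieldType) (A : 'M[K]_2) :
  \tr A = 0 -> \det A = 0 -> A != 0 ->
  exists P, P \is a GRing.unit /\ A * P = P * mk2 0 1 0 0.
Proof.
move=> t; rewrite (sl2E t) det_mk2; set a := A 0 0; set b := A 0 1; set c := A 1 0.
move=> hr A0.
have [c0|c0] := eqVneq c 0.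
  have [b0|b0] := eqVneq b 0.
    exfalso; move: hr A0; rewrite c0 b0 mul0r subr0 mulrN => /eqP; rewrite oppr_eq0 mulf_eq0 orbb => /eqP ->.
    by rewrite oppr0 -mk2_0 eqxx.
  exists (mk2 b 0 (- a) 1); split.
    by apply: unit_mk2; rewrite mulr1 mul0r subr0.
  by rewrite !mk2_mul; congr (mk2 _ _ _ _); solve_rel hr.
exists (mk2 a 1 c 0); split.
  by apply: unit_mk2; rewrite mulr0 mul1r sub0r oppr_eq0.
by rewrite !mk2_mul; congr (mk2 _ _ _ _); solve_rel hr.
Qed.
Lemma eq_lie_eval (K : nzRingType) m (a b : 'I_m -> 'M[K]_2) (f : lie_poly K m) :
  (forall i, a i = b i) -> lie_eval a f = lie_eval b f.
Proof. by move=> h; elim: f => //= [f -> g ->|c f ->|f -> g ->]. Qed.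

Lemma sqrt_ex (K : closedFieldType) (z : K) : exists x, x ^+ 2 = z.
Proof.
have /closed_rootP [x rx] : size ('X^2 - z%:P : {poly K}) != 1.
  by rewrite size_XnsubC.
by exists x; move: rx; rewrite /root !hornerE subr_eq0 => /eqP.
Qed.

Lemma key (K : closedFieldType) m (f : lie_poly K m) (M : 'M[K]_2) :
  (2%:R : K) != 0 -> lie_image f M -> M != 0 ->
  forall A : 'M[K]_2, \tr A = 0 -> \det A != 0 -> lie_image f A.
Proof.
move=> two [a0 [ha0 e0]] M0 A tA dA.
pose t := fun i => let B := a0 i in
  Trip (B 0 0)%:P%:P (((B 0 1 + B 1 0) / 2%:R))%:P%:P (((B 0 1 - B 1 0) / 2%:R))%:P%:P.
have hrep : forall i, rho 1 1 (t i) = a0 i.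
  move=> i; rewrite [RHS](sl2E (ha0 i)) /rho /= !evC; congr (mk2 _ _ _ _); by field; rewrite ?two.
set T := trip_eval t f.
have eT : rho 1 1 T = M by rewrite /T rho_eval -e0; apply: eq_lie_eval.
have NT0 : NT T != 0.
  apply/negP => /eqP; rewrite /NT => /eqP; rewrite oppr_eq0 => /eqP /parity [c1 c2 c3].
  move: eT; rewrite /rho c1 c2 c3 !ev0 !mul0r addr0 subrr oppr0 -mk2_0 => eM.
  by rewrite -eM eqxx in M0.
have NT00 : ev 0 0 (NT T) = 0 by rewrite /NT !evE; ring.
have [X0 [y0 hXy]] := surj2 NT0 NT00 (\det A).
have [x0 hx0] := sqrt_ex X0.
set B := rho x0 y0 T.
have hB : lie_image f B.
  exists (fun i => rho x0 y0 (t i)); split; first by move=> i; exact: tr_rho.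
  by rewrite /B /T rho_eval.
have dB : \det B = \det A by rewrite /B det_rho hx0.
have [l hl] := sqrt_ex (- \det A).
have l0 : l != 0.
  by apply: contra dA => /eqP l0; move: hl; rewrite l0 expr0n /= => /esym/eqP; rewrite oppr_eq0.
have [P [Pu eP]] := nf_ss two tA l0 hl.
have [Q [Qu eQ]] := nf_ss two (tr_rho x0 y0 T) l0 (etrans hl (congr1 -%R (esym dB))).
exact: image_transfer Pu Qu eP eQ hB.
Qed.
Theorem theorem1p16 (K : closedFieldType) (m : nat) (f : lie_poly K m) :
  (2%:R : K) != 0 ->
  (forall M : 'M[K]_2, lie_image f M <-> M = 0)
  \/ (forall M : 'M[K]_2, lie_image f M <-> in_sl2 M)
  \/ (forall M : 'M[K]_2,
        lie_image f M <-> (M = 0 \/ (in_sl2 M /\ ~ nilpotent_mx M))).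
Proof.
move=> two.
have [[M0 [hM0 nz0]]|no] := classic (exists M, lie_image f M /\ M != 0); last first.
  left => M; split=> [h|->]; last exact: image0.
  by apply/eqP; apply: contraT => nz; case: no; exists M.
have ss : forall A : 'M[K]_2, \tr A = 0 -> \det A != 0 -> lie_image f A.
  exact: key two hM0 nz0.
have [[N [hN [nzN dN]]]|nonil] :=
  classic (exists N, lie_image f N /\ N != 0 /\ \det N = 0).
  right; left => M; split; first exact: image_sl2.
  move=> tM; have [->|nzM] := eqVneq M 0; first exact: image0.
  have [dM|dM] := eqVneq (\det M) 0; last exact: ss.
  have [P [Pu eP]] := nf_nil tM dM nzM.
  have [Q [Qu eQ]] := nf_nil (image_sl2 hN) dN nzN.
  exact: image_transfer Pu Qu eP eQ hN.
right; right => M; split.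
  move=> hM; have [->|nzM] := eqVneq M 0; first by left.
  right; split; first exact: image_sl2 hM.
  move/(nilp_det (image_sl2 hM)) => dM.
  by case: nonil; exists M.
case=> [->|[tM nM]]; first exact: image0.
apply: ss => //; apply/eqP => dM; apply: nM; exact/(nilp_det tM).
Qed.
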